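(* Let $\{e_n\}_{n\in\mathbb{Z}}$ be a sequence of i.i.d. real random variables, and let $q,d\ge 1$ be integers, $r\in\mathbb{R}$, and $\mu_1,\mu_2,\phi_1,\dots,\phi_q,\psi_1,\dots,\psi_q\in\mathbb{R}$. Define $$a_n=\mu_2+e_n+\sum_{i=1}^q\psi_ie_{n-i},\qquad b_n=\mu_1+e_n+\sum_{i=1}^q\phi_ie_{n-i},$$ $$U_n=\mathbb{1}(a_n\le r),\qquad W_n=\mathbb{1}(b_n\le r)-\mathbb{1}(a_n\le r).$$ Assume $\mathbb{P}(a_n\le r,\ b_n\le r)+\mathbb{P}(a_n>r,\ b_n>r)\neq 0$. Then the series $$\alpha_{n-d}=\sum_{j=1}^{\infty}\Big[\Big(\prod_{s=1}^{j-1}W_{n-sd}\Big)U_{n-jd}\Big]$$ (with the empty product equal to $1$) converges in $L^1$ and almost surely for every $n\in\mathbb{Z}$, and the TMA$(q)$ equation $$y_n=\begin{cases}\mu_1+e_n+\sum_{i=1}^q\phi_ie_{n-i}, & \text{if } y_{n-d}\le r,\\ \mu_2+e_n+\sum_{i=1}^q\psi_ie_{n-i}, & \text{if } y_{n-d}>r,\end{cases}\qquad n\in\mathbb{Z},$$ has a strictly stationary and ergodic solution given by $$y_n=\mu_2+e_n+\sum_{i=1}^q\psi_ie_{n-i}+\Big[(\mu_1-\mu_2)+\sum_{i=1}^q(\phi_i-\psi_i)e_{n-i}\Big]\alpha_{n-d}\quad\text{a.s.}$$ Moreover this solution is unique: any process $\{\tilde y_n\}_{n\in\mathbb{Z}}$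 on the same probability space satisfying the TMA$(q)$ equation almost surely for all $n$ coincides with it almost surely for every $n$.
   Context: $\mathbb{1}(\cdot)$ denotes the indicator function. A solution of the TMA$(q)$ equation means a real-valued process $\{y_n\}_{n\in\mathbb{Z}}$ defined on the same probability space as $\{e_n\}$ such that the displayed equation holds almost surely for every $n\in\mathbb{Z}$. *)

(* Defs.v *)
From HB Require Import structures.
From mathcomp Require Import all_boot all_order all_algebra.
From mathcomp Require Import all_classical all_reals all_analysis.
Set Implicit Arguments. Unset Strict Implicit. Unset Printing Implicit Defensive.
Import Order.TTheory GRing.Theory Num.Theory.
Import numFieldNormedType.Exports.
Local Open Scope classical_set_scope.
Local Open Scope ring_scope.

Section TMA.
Context {dT : measure_display} {T : measurableType dT} {R : realType}.
Variable P : probability T R.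

Definition mutually_independent (X : int -> T -> R) : Prop :=
  forall (s : seq int) (B : int -> set R), uniq s ->
    (forall i, measurable (B i)) ->
    P (\bigcap_(i in [set` s]) (X i @^-1` B i)) =
    (\prod_(i <- s) P (X i @^-1` B i))%E.

Definition identically_distributed (X : int -> T -> R) : Prop :=
  forall (i : int) (B : set R), measurable B ->
    P (X i @^-1` B) = P (X 0 @^-1` B).

Definition iid (X : int -> T -> R) : Prop :=
  (forall i, measurable_fun setT (X i)) /\
  mutually_independent X /\ identically_distributed X.

Definition cylinders : set (set (int -> R)) :=
  [set A | exists (i : int) (B : set R), measurable B /\
           A = (fun f : int -> R => f i) @^-1` B].

Definition path_measurable (A : set (int -> R)) : Prop := <<s cylinders >> A.

Definition shift (f : int -> R) : int -> R := fun n => f (n + 1).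

Definition path (y : int -> T -> R) : T -> (int -> R) := fun w n => y n w.

Definition strictly_stationary (y : int -> T -> R) : Prop :=
  forall A, path_measurable A ->
    P (path y @^-1` (shift @^-1` A)) = P (path y @^-1` A).

Definition ergodic (y : int -> T -> R) : Prop :=
  forall A, path_measurable A -> shift @^-1` A = A ->
    P (path y @^-1` A) = 0%E \/ P (path y @^-1` A) = 1%E.

(** The model ingredients. phi, psi are used at indices 1..q. *)
Definition ma_part (mu : R) (coef : nat -> R) (q : nat) (e : int -> T -> R)
  (n : int) : T -> R :=
  fun w => mu + e n w + \sum_(1 <= i < q.+1) coef i * e (n - i%:Z) w.

Definition indic (b : bool) : R := if b then 1 else 0.

Definition alpha_partial (a b : int -> T -> R) (r : R) (d : nat)
  (n : int) (N : nat) : T -> R :=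
  fun w => \sum_(1 <= j < N.+1)
    (\prod_(1 <= s < j)
        (indic (b (n - (s * d)%:Z) w <= r) - indic (a (n - (s * d)%:Z) w <= r)))
    * indic (a (n - (j * d)%:Z) w <= r).

Definition TMA_solution (a b : int -> T -> R) (r : R) (d : nat)
  (y : int -> T -> R) : Prop :=
  forall n : int, {ae P, forall w,
    y n w = (if y (n - d%:Z) w <= r then b n w else a n w)}.

End TMA.

(* Main.v *)
Require Import Defs.
From HB Require Import structures.
From mathcomp Require Import all_boot all_order all_algebra.
From mathcomp Require Import all_classical all_reals all_analysis.
From mathcomp Require Import lra zify measurable_realfun.

Module A.
Set Implicit Arguments. Unset Strict Implicit. Unset Printing Implicit Defensive.
Import Order.TTheory GRing.Theory Num.Theory.
Import numFieldNormedType.Exports.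
Local Open Scope classical_set_scope.
Local Open Scope ring_scope.
Section PathSpace.
Context {R : realType}.
Local Notation Om := (int -> R).

Definition rect (s : seq int) (B : int -> set R) : set Om :=
  [set f | forall i, i \in s -> B i (f i)].

Definition Rect (I : set int) : set (set Om) :=
  [set A | exists s B, [/\ uniq s, (forall i, i \in s -> I i),
      (forall i, measurable (B i)) & A = rect s B]].

Definition sI I := <<s Rect I>>.
Definition OmI (I : set int) := g_sigma_algebraType (Rect I).

Lemma rect_cat s1 s2 B1 B2 : rect s1 B1 `&` rect s2 B2 =
  rect (undup (s1 ++ s2)) (fun i => (if i \in s1 then B1 i else setT) `&`
                                  (if i \in s2 then B2 i else setT)).
Proof.
apply/seteqP; split => f.
- move=> [h1 h2] i; rewrite mem_undup mem_cat => _.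
  by split; case: ifP => // H; [exact: h1|exact: h2].
- move=> h; split => i Hi.
  + by have := h i; rewrite mem_undup mem_cat Hi /= => /(_ isT) [].
  + by have := h i; rewrite mem_undup mem_cat Hi orbT => /(_ isT) [].
Qed.

Lemma Rect_setI I : setI_closed (Rect I).
Proof.
move=> _ _ [s1 [B1 [u1 I1 m1 ->]]] [s2 [B2 [u2 I2 m2 ->]]].
rewrite rect_cat; eexists; eexists; split; last reflexivity; first exact: undup_uniq.
- move=> i; rewrite mem_undup mem_cat => /orP[]; [exact: I1|exact: I2].
- move=> i; apply: measurableI.
  + by case: ifP => _; [apply: m1|apply: measurableT].
  + by case: ifP => _; [apply: m2|apply: measurableT].
Qed.

Lemma sI_sigma I : sigma_algebra setT (sI I).
Proof. exact: smallest_sigma_algebra. Qed.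

Lemma sI_mono I J : I `<=` J -> sI I `<=` sI J.
Proof.
move=> IJ; apply: sub_sigma_algebra2 => A [s [B [u sIs mB ->]]].
by exists s, B; split=> // i /sIs; exact: IJ.
Qed.

Lemma sI_meas I A : sI I A -> measurable (A : set (OmI I)).
Proof. by []. Qed.

Lemma rect1 i (B : set R) : rect [:: i] (fun _ => B) = (fun f : Om => f i) @^-1` B.
Proof.
apply/seteqP; split => f /=.
- by move=> h; apply: h; rewrite inE.
- by move=> h j; rewrite inE => /eqP ->.
Qed.

Lemma rect_cons i s B : rect (i :: s) B = (fun f : Om => f i) @^-1` (B i) `&` rect s B.
Proof.
apply/seteqP; split => f /=.
- by move=> h; split; [apply: h; rewrite inE eqxx| move=> j js; apply: h; rewrite inE js orbT].
- by move=> [h1 h2] j; rewrite inE => /orP[/eqP ->//|]; exact: h2.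
Qed.

Lemma rect_nil B : rect [::] B = setT.
Proof. by apply/seteqP; split => f //= _ i. Qed.

Definition Om' := g_sigma_algebraType (@cylinders R).

Lemma rect_pm s B : (forall i, measurable (B i)) -> measurable (rect s B : set Om').
Proof.
move=> mB; elim: s => [|i s ih]; first by rewrite rect_nil; exact: measurableT.
rewrite rect_cons; apply: measurableI => //.
by apply: sub_sigma_algebra; exists i, (B i).
Qed.

Lemma pm_sI A : path_measurable A <-> sI setT A.
Proof.
split.
- apply: sub_sigma_algebra2 => _ [i [B [mB ->]]].
  by exists [:: i], (fun _ => B); split => //; rewrite rect1.
- apply: smallest_sub; first exact: smallest_sigma_algebra.
  by move=> _ [s [B [_ _ mB ->]]]; exact: rect_pm.
Qed.

Lemma sI_pm I A : sI I A -> path_measurable A.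
Proof. by move=> h; apply/pm_sI; apply: (sI_mono _ h). Qed.

Lemma coord_meas I i : I i -> measurable_fun setT (fun f : OmI I => f i).
Proof.
move=> Ii _ B mB; rewrite setTI; apply: sub_sigma_algebra.
by exists [:: i], (fun _ => B); split => //; [move=> j; rewrite inE => /eqP ->|rewrite rect1].
Qed.

End PathSpace.

End A.

Module B.
Import A.
Set Implicit Arguments. Unset Strict Implicit. Unset Printing Implicit Defensive.
Import Order.TTheory GRing.Theory Num.Theory.
Import numFieldNormedType.Exports.
Local Open Scope classical_set_scope.
Local Open Scope ring_scope.

Definition shiftn {R : realType} (k : int) (f : int -> R) : int -> R := fun n => f (n + k).

Section Prob.
Context {dT : measure_display} {T : measurableType dT} {R : realType}.
Variable P : probability T R.
Variable X : T -> (int -> R).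
Hypothesis HXm : forall i, measurable_fun setT (fun w => X w i).
Local Notation Om := (int -> R).
Local Notation sI := (@A.sI R).
Local Notation Rect := (@A.Rect R).
Local Notation rect := (@A.rect R).
Local Notation OmI := (@A.OmI R).

Lemma X_pm A : path_measurable A -> measurable (X @^-1` A).
Proof.
apply: (@smallest_sub _ _ _ [set A | measurable (X @^-1` A)]).
  split => /=.
  - by rewrite preimage_set0.
  - by move=> B mB; rewrite setTD -preimage_setC; exact: measurableC.
  - by move=> F mF; rewrite preimage_bigcup; exact: bigcupT_measurable.
move=> _ [i [B [mB ->]]] /=; have := HXm i measurableT mB; by rewrite setTI.
Qed.

Lemma X_sI I A : sI I A -> measurable (X @^-1` A).
Proof. by move=> h; apply: X_pm; exact: sI_pm h. Qed.

Definition goodm (I : set int) (mu : set Om -> \bar R) :=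
  [/\ forall A, sI I A -> mu A \is a fin_num,
      forall A, sI I A -> mu (~` A) = (mu setT - mu A)%E &
      forall F : (set Om)^nat, (forall n, sI I (F n)) -> trivIset setT F ->
        (fun n => \sum_(0 <= i < n) mu (F i))%E @ \oo --> mu (\bigcup_n F n)].

Lemma sI_setT I : sI I setT.
Proof. by have [h0 hC _] := sI_sigma (R:=R) I; rewrite -setC0 -setTD; exact: hC. Qed.

Lemma sI_setC I A : sI I A -> sI I (~` A).
Proof. by have [h0 hC _] := sI_sigma (R:=R) I; rewrite -setTD; exact: hC. Qed.

Lemma sI_bigcup I (F : (set Om)^nat) : (forall n, sI I (F n)) -> sI I (\bigcup_n F n).
Proof. by have [h0 hC hU] := sI_sigma (R:=R) I; exact: hU. Qed.

Lemma sI_setI I A B : sI I A -> sI I B -> sI I (A `&` B).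
Proof. by move=> hA hB; exact: (@measurableI _ (OmI I)). Qed.

Lemma sI_setD I A B : sI I A -> sI I B -> sI I (A `\` B).
Proof. by move=> hA hB; exact: (@measurableD _ (OmI I)). Qed.

Lemma sI_setU I A B : sI I A -> sI I B -> sI I (A `|` B).
Proof. by move=> hA hB; exact: (@measurableU _ (OmI I)). Qed.

Lemma agree I mu nu : goodm I mu -> goodm I nu -> mu setT = nu setT ->
  (forall A, Rect I A -> mu A = nu A) -> forall A, sI I A -> mu A = nu A.
Proof.
move=> [_ Cm Um] [_ Cn Un] eT eR.
pose H := [set A | sI I A /\ mu A = nu A].
suff : <<s setT, Rect I>> `<=` H by move=> h A /h [].
apply: lambda_system_subset; [exact: Rect_setI| | |by []].
- apply/dynkin_lambda_system; split.
  + by split; [exact: sI_setT|].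
  + by move=> A [sA eA]; split; [exact: sI_setC| rewrite Cm // Cn // eT eA].
  + move=> F tF HF; split; first by apply: sI_bigcup => n; case: (HF n).
    have e : (fun n => \sum_(0 <= i < n) mu (F i))%E =
             (fun n => \sum_(0 <= i < n) nu (F i))%E.
      by apply: funext => n; apply: eq_bigr => i _; case: (HF i).
    have h1 := Um F (fun n => proj1 (HF n)) tF.
    have h2 := Un F (fun n => proj1 (HF n)) tF.
    rewrite e in h1; exact: (cvg_unique _ h1 h2).
- by move=> A RA; split; [exact: sub_sigma_algebra|exact: eR].
Qed.

Lemma trivIset_pre (g : T -> Om) (F : (set Om)^nat) :
  trivIset setT F -> trivIset setT (fun n => g @^-1` F n).
Proof.
move=> tF i j _ _ [w [h1 h2]]; apply: tF => //; by exists (g w).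
Qed.

Lemma goodm_pre I (g : T -> Om) :
  (forall A, sI I A -> measurable (g @^-1` A)) ->
  goodm I (fun A => P (g @^-1` A)).
Proof.
move=> mg; split.
- by move=> A /mg mA; exact: fin_num_measure.
- move=> A /mg mA; rewrite -preimage_setC probability_setC // preimage_setT.
  by rewrite probability_setT.
- move=> F mF tF; rewrite preimage_bigcup.
  apply: (@measure_semi_sigma_additive _ _ _ P (fun n => g @^-1` F n)).
  + by move=> n; exact: mg.
  + exact: trivIset_pre.
  + by rewrite -preimage_bigcup; apply: mg; exact: sI_bigcup.
Qed.

Lemma goodm_preI I (g : T -> Om) Y : measurable Y ->
  (forall A, sI I A -> measurable (g @^-1` A)) ->
  goodm I (fun A => P (g @^-1` A `&` Y)).
Proof.
move=> mY mg; split.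
- by move=> A /mg mA; apply: fin_num_measure; exact: measurableI.
- move=> A /mg mA; rewrite -preimage_setC preimage_setT setTI.
  rewrite setIC -setDE measureD //; last by rewrite (le_lt_trans (probability_le1 _ _)) ?ltry.
  by rewrite setIC.
- move=> F mF tF; rewrite preimage_bigcup setI_bigcupl.
  apply: (@measure_semi_sigma_additive _ _ _ P (fun n => g @^-1` F n `&` Y)).
  + by move=> n; apply: measurableI => //; exact: mg.
  + move=> i j _ _ [w [[h1 _] [h2 _]]]; apply: tF => //; by exists (g w).
  + rewrite -setI_bigcupl -preimage_bigcup; apply: measurableI => //.
    by apply: mg; exact: sI_bigcup.
Qed.

Lemma goodm_scale I mu c : c \is a fin_num -> (0 <= c)%E ->
  (forall A, sI I A -> (0 <= mu A)%E) ->
  goodm I mu -> goodm I (fun A => mu A * c)%E.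
Proof.
move=> fc c0 mu0 [F1 C1 U1]; split.
- by move=> A sA; apply: fin_numM => //; exact: F1.
- move=> A sA; rewrite C1 // muleBl //.
  by apply: fin_num_adde_defl; rewrite fin_numN; exact: F1.
- move=> F mF tF.
  have e : (fun n => \sum_(0 <= i < n) (mu (F i) * c))%E =
           (fun n => (\sum_(0 <= i < n) mu (F i)) * c)%E.
    by apply: funext => n; rewrite ge0_sume_distrl // => i _; exact: mu0.
  rewrite e; apply: cvgeZr => //; exact: U1.
Qed.


Lemma rect_shift k s B : shiftn k @^-1` rect s B = rect (map (fun i => i + k) s) (fun j => B (j - k)).
Proof.
apply/seteqP; split => f /=.
- move=> h j /mapP [i Hi ->]; rewrite addrK; exact: h.
- move=> h i Hi; have := h (i + k) (map_f _ Hi); by rewrite addrK.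
Qed.

Lemma sI_shift I k A : sI I A -> sI (fun j => I (j - k)) (shiftn k @^-1` A).
Proof.
apply: (@smallest_sub _ _ _ [set A | sI (fun j => I (j - k)) (shiftn k @^-1` A)]).
  split => /=.
  - rewrite preimage_set0; have [] := sI_sigma (R:=R) (fun j => I (j - k)); by [].
  - by move=> B mB; rewrite setTD -preimage_setC; exact: sI_setC.
  - by move=> F mF; rewrite preimage_bigcup; exact: sI_bigcup.
move=> _ [s [B [u Is mB ->]]] /=; rewrite rect_shift; apply: sub_sigma_algebra.
exists (map (fun i => i + k) s), (fun j => B (j - k)); split => //.
- by rewrite map_inj_uniq //; exact: addIr.
- by move=> j /mapP [i Hi ->]; rewrite addrK; exact: Is.
Qed.

Hypothesis Hind : forall s B, uniq s -> (forall i, measurable (B i)) ->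
  P (X @^-1` rect s B) = (\prod_(i <- s) P (X @^-1` ((fun f : Om => f i) @^-1` B i)))%E.
Hypothesis Hid : forall i B, measurable B ->
  P (X @^-1` ((fun f : Om => f i) @^-1` B)) = P (X @^-1` ((fun f : Om => f 0) @^-1` B)).

Lemma indep_rect s1 B1 s2 B2 : uniq s1 -> uniq s2 -> (forall i, i \in s1 -> i \notin s2) ->
  (forall i, measurable (B1 i)) -> (forall i, measurable (B2 i)) ->
  P (X @^-1` (rect s1 B1 `&` rect s2 B2)) = (P (X @^-1` rect s1 B1) * P (X @^-1` rect s2 B2))%E.
Proof.
move=> u1 u2 H12 m1 m2.
have -> : rect s1 B1 `&` rect s2 B2 = rect (s1 ++ s2) (fun i => if i \in s1 then B1 i else B2 i).
  apply/seteqP; split => f.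
  - move=> [h1 h2] i; case: ifPn => [/h1//|n1]; rewrite mem_cat (negbTE n1) /=; exact: h2.
  - move=> h; split => i Hi.
    + by have := h i; rewrite mem_cat Hi /= => /(_ isT).
    + have n1 : i \notin s1 by apply/negP => /H12; rewrite Hi.
      by have := h i; rewrite mem_cat Hi orbT (negbTE n1) => /(_ isT).
rewrite Hind; last by move=> i; case: ifP.
- rewrite big_cat /= !Hind //; congr (_ * _)%E; apply: eq_big_seq => i Hi.
  + by rewrite Hi.
  + have n1 : i \notin s1 by apply/negP => /H12; rewrite Hi.
    by rewrite (negbTE n1).
- rewrite cat_uniq u1 u2 /= andbT; apply/hasPn => i Hi2; apply/negP => Hi1.
  by have := H12 _ Hi1; rewrite Hi2.
Qed.

Lemma indep I J A B : (forall i, I i -> ~ J i) -> sI I A -> sI J B ->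
  P (X @^-1` (A `&` B)) = (P (X @^-1` A) * P (X @^-1` B))%E.
Proof.
move=> IJ.
have step1 : forall B, Rect J B -> forall A, sI I A ->
    P (X @^-1` (A `&` B)) = (P (X @^-1` A) * P (X @^-1` B))%E.
  move=> _ [s2 [B2 [u2 J2 m2 ->]]] A' sA.
  have mY : measurable (X @^-1` rect s2 B2).
    by apply: (@X_sI J); apply: sub_sigma_algebra; exists s2, B2.
  rewrite preimage_setI.
  apply: (agree (goodm_preI mY (@X_sI I))
     (goodm_scale (fin_num_measure _ _ mY) (measure_ge0 _ _) (fun A _ => measure_ge0 _ _)
        (goodm_pre (@X_sI I)))) sA.
  + by rewrite /= preimage_setT setTI probability_setT mul1e.
  + move=> _ [s1 [B1 [u1 I1 m1 ->]]]; rewrite -preimage_setI indep_rect //.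
    move=> i /I1 Ii; apply/negP => /J2; exact: IJ.
move=> sA sB.
have mY : measurable (X @^-1` A) by exact: (@X_sI I).
rewrite preimage_setI setIC muleC.
apply: (agree (goodm_preI mY (@X_sI J))
   (goodm_scale (fin_num_measure _ _ mY) (measure_ge0 _ _) (fun A _ => measure_ge0 _ _)
      (goodm_pre (@X_sI J)))) sB.
- by rewrite /= preimage_setT setTI probability_setT mul1e.
- move=> B' RB /=; by rewrite setIC -preimage_setI step1 // muleC.
Qed.

Lemma shift_inv k A : path_measurable A -> P (X @^-1` (shiftn k @^-1` A)) = P (X @^-1` A).
Proof.
move=> /pm_sI sA.
have mg : forall A, sI setT A -> measurable ((shiftn k \o X) @^-1` A).
  move=> B sB; have h := sI_shift (k:=k) sB; have := (@X_sI _ _ h); exact.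
apply: (agree (goodm_pre mg) (goodm_pre (@X_sI setT))) sA => //.
move=> _ [s [B [u _ mB ->]]].
change (P (X @^-1` (shiftn k @^-1` rect s B)) = P (X @^-1` rect s B)).
rewrite rect_shift !Hind //; last by rewrite map_inj_uniq //; exact: addIr.
rewrite big_map; apply: eq_bigr => i _; rewrite addrK.
by rewrite Hid // [RHS]Hid.
Qed.

End Prob.

End B.

Module C.
Import A B.
Set Implicit Arguments. Unset Strict Implicit. Unset Printing Implicit Defensive.
Import Order.TTheory GRing.Theory Num.Theory.
Import numFieldNormedType.Exports.
Local Open Scope classical_set_scope.
Local Open Scope ring_scope.

Section Erg.
Context {dT : measure_display} {T : measurableType dT} {R : realType}.
Variable P : probability T R.
Variable X : T -> (int -> R).
Hypothesis HXm : forall i, measurable_fun setT (fun w => X w i).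
Local Notation Om := (int -> R).
Local Notation sI := (@A.sI R).
Local Notation Rect := (@A.Rect R).
Local Notation rect := (@A.rect R).
Local Notation pm := (@path_measurable R).

Let Xm A (h : pm A) : measurable (X @^-1` A) := X_pm HXm h.

Definition mr (A : set Om) : R := fine (P (X @^-1` A)).

Lemma mrE A : pm A -> P (X @^-1` A) = (mr A)%:E.
Proof. by move=> h; rewrite fineK //; apply: fin_num_measure; exact: Xm _ h. Qed.

Lemma mr_ge0 A : 0 <= mr A.
Proof. exact/fine_ge0/measure_ge0. Qed.

Lemma pmI A B : pm A -> pm B -> pm (A `&` B).
Proof. exact: (@measurableI _ (@Om' R)). Qed.
Lemma pmU A B : pm A -> pm B -> pm (A `|` B).
Proof. exact: (@measurableU _ (@Om' R)). Qed.
Lemma pmD A B : pm A -> pm B -> pm (A `\` B).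
Proof. exact: (@measurableD _ (@Om' R)). Qed.
Lemma pmT : pm setT.
Proof. exact: (@measurableT _ (@Om' R)). Qed.
Lemma pm0 : pm set0.
Proof. exact: (@measurable0 _ (@Om' R)). Qed.
Lemma pm_bigcup (F : (set Om)^nat) : (forall n, pm (F n)) -> pm (\bigcup_n F n).
Proof. exact: (@bigcupT_measurable _ (@Om' R)). Qed.

Lemma mr_le1 A : pm A -> mr A <= 1.
Proof. by move=> h; rewrite -lee_fin -mrE //; exact: probability_le1 (Xm h). Qed.

Lemma mr_le A B : pm A -> pm B -> A `<=` B -> mr A <= mr B.
Proof.
move=> hA hB AB; rewrite -lee_fin -!mrE //; apply: le_measure.
- by apply/mem_set; exact: Xm hA.
- by apply/mem_set; exact: Xm hB.
- by move=> w; exact: AB.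
Qed.

Lemma mr_sub A B C : pm A -> pm B -> pm C -> A `<=` B `|` C -> mr A <= mr B + mr C.
Proof.
move=> hA hB hC ABC; apply: (le_trans (mr_le hA (pmU hB hC) ABC)).
rewrite -lee_fin EFinD -!mrE //; last exact: pmU.
by rewrite preimage_setU; apply: measureU2; exact: Xm.
Qed.

Lemma mr_D A B : pm A -> pm B -> B `<=` A -> mr (A `\` B) = mr A - mr B.
Proof.
move=> hA hB BA; apply/eqP; rewrite -eqe EFinB -!mrE //; last exact: pmD.
rewrite (_ : X @^-1` (A `\` B) = X @^-1` A `\` X @^-1` B) // measureD; first last.
- by rewrite (le_lt_trans (probability_le1 _ _)) ?ltry //; exact: Xm.
- exact: Xm.
- exact: Xm.
by rewrite -preimage_setI setIidr.
Qed.

Lemma mr_setT : mr setT = 1.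
Proof. by rewrite /mr preimage_setT probability_setT. Qed.

Lemma mr_set0 : mr set0 = 0.
Proof. by rewrite /mr preimage_set0 measure0. Qed.

Definition sd (A B : set Om) : set Om := [set x | (A x /\ ~ B x) \/ (B x /\ ~ A x)].

Lemma pm_sd A B : pm A -> pm B -> pm (sd A B).
Proof.
move=> hA hB; have -> : sd A B = (A `\` B) `|` (B `\` A) by [].
by apply: pmU; exact: pmD.
Qed.

Lemma sdxx A : sd A A = set0.
Proof. by apply/seteqP; split => x // [[]|[]]. Qed.

Definition win (N : nat) : set int := [set j | (absz j <= N)%N].

Lemma approx A : pm A -> forall eps, 0 < eps ->
  exists N C, sI (win N) C /\ mr (sd A C) <= eps.
Proof.
move=> /pm_sI sA.
pose H := [set A | pm A /\ forall eps, 0 < eps ->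
  exists N C, sI (win N) C /\ mr (sd A C) <= eps].
suff : <<s setT, Rect setT>> `<=` H by move=> h; case: (h _ sA).
apply: lambda_system_subset; [exact: Rect_setI | | | by []].
- split.
  + by [].
  + split; first exact: pmT.
    move=> eps e0; exists 0%N, setT; split; first exact: sI_setT.
    by rewrite sdxx mr_set0 ltW.
  + move=> A1 B1 BA [pA hA] [pB hB]; split; first exact: pmD.
    move=> eps e0.
    have e2 : 0 < eps / 2 by rewrite divr_gt0.
    have [NA [CA [sCA hCA]]] := hA _ e2.
    have [NB [CB [sCB hCB]]] := hB _ e2.
    have sCA' : sI (win (maxn NA NB)) CA.
      by apply: sI_mono sCA => j /= h; apply: leq_trans h (leq_maxl _ _).
    have sCB' : sI (win (maxn NA NB)) CB.
      by apply: sI_mono sCB => j /= h; apply: leq_trans h (leq_maxr _ _).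
    exists (maxn NA NB), (CA `\` CB); split; first exact: sI_setD.
    have pCA := sI_pm sCA; have pCB := sI_pm sCB.
    apply: le_trans (_ : mr (sd A1 CA) + mr (sd B1 CB) <= eps); last first.
      by rewrite (splitr eps) lerD.
    apply: mr_sub.
    - by apply: pm_sd; apply: pmD.
    - exact: pm_sd.
    - exact: pm_sd.
    move=> x; rewrite /sd /setD /setU /=.
    case: (pselect (A1 x)); case: (pselect (B1 x));
      case: (pselect (CA x)); case: (pselect (CB x)); tauto.
  + move=> F ndF HF; split; first by apply: pm_bigcup => n; case: (HF n).
    move=> eps e0.
    have e2 : 0 < eps / 2 by rewrite divr_gt0.
    have pF n : pm (F n) by case: (HF n).
    have pU := pm_bigcup pF.
    have c0 : (fun n => P (X @^-1` F n)) @ \oo --> (mr (\bigcup_n F n))%:E.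
      rewrite -mrE // preimage_bigcup.
      apply: (@nondecreasing_cvg_mu _ _ _ P (fun n => X @^-1` F n)).
      * by move=> n; exact: Xm.
      * by rewrite -preimage_bigcup; exact: Xm.
      * move=> n m nm; apply/subsetPset => w /=.
        by have /subsetPset := ndF n m nm; apply.
    have c1 : (fun n => mr (F n)) @ \oo --> mr (\bigcup_n F n).
      exact: fine_cvg c0.
    have /cvgrPdist_le /(_ _ e2) [N _ HN] := c1.
    have {}HN := HN N (leqnn N); rewrite /= in HN.
    have [NC [C [sC hC]]] := (HF N).2 _ e2.
    exists NC, C; split => //.
    have pC := sI_pm sC.
    apply: le_trans (_ : mr ((\bigcup_n F n) `\` F N) + mr (sd (F N) C) <= eps).
      apply: mr_sub.
      - exact: pm_sd.
      - exact: pmD.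
      - exact: pm_sd.
      move=> x; have FU : F N x -> (\bigcup_n F n) x by exists N.
      rewrite /sd /setD /setU /=; move: FU.
      case: (pselect ((\bigcup_n F n) x)); case: (pselect (F N x));
        case: (pselect (C x)); tauto.
    rewrite mr_D //; last by move=> x Fx; exists N.
    rewrite (splitr eps) lerD //.
    by move: HN; rewrite ger0_norm // subr_ge0; apply: mr_le => // x Fx; exists N.
- move=> _ [s [B [u _ mB ->]]]; split.
    by apply: (@sI_pm _ setT); apply: sub_sigma_algebra; exists s, B.
  move=> eps e0; exists (\max_(i <- s) absz i), (rect s B); split.
    apply: sub_sigma_algebra; exists s, B; split => // i Hi.
    rewrite /win /=; exact: leq_bigmax_seq.
  by rewrite sdxx mr_set0 ltW.
Qed.


Hypothesis Hind : forall s B, uniq s -> (forall i, measurable (B i)) ->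
  P (X @^-1` rect s B) = (\prod_(i <- s) P (X @^-1` ((fun f : Om => f i) @^-1` B i)))%E.
Hypothesis Hid : forall i B, measurable B ->
  P (X @^-1` ((fun f : Om => f i) @^-1` B)) = P (X @^-1` ((fun f : Om => f 0) @^-1` B)).

Lemma shiftn_inv (A : set Om) : Defs.shift @^-1` A = A -> forall k : nat, shiftn k%:Z @^-1` A = A.
Proof.
move=> hA; elim=> [|k ih].
- have E f : shiftn 0 f = f by apply: funext => n; rewrite /shiftn addr0.
  by apply/seteqP; split => f /=; rewrite E.
- have E f : shiftn k.+1%:Z f = shiftn k%:Z (Defs.shift f).
    by apply: funext => n; rewrite /shiftn /Defs.shift; congr f; lia.
  rewrite -[in RHS]hA -[in RHS]ih.
  by apply/seteqP; split => f /=; rewrite E.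
Qed.

Lemma erg (A : set Om) : pm A -> Defs.shift @^-1` A = A ->
  P (X @^-1` A) = 0%E \/ P (X @^-1` A) = 1%E.
Proof.
move=> pA hA; rewrite mrE //.
set a := mr A.
have a0 : 0 <= a by exact: mr_ge0.
have a1 : a <= 1 by exact: mr_le1.
have key : forall eps, 0 < eps -> a * (1 - a) <= 4 * eps.
  move=> eps e0.
  have [N [C [sC hC]]] := approx pA e0.
  pose K : nat := (2 * N).+1.
  pose C' := shiftn K%:Z @^-1` C.
  have sC' : sI (fun j => win N (j - K%:Z)) C' := sI_shift sC.
  have pC := sI_pm sC; have pC' := sI_pm sC'.
  have dis : forall i, win N i -> ~ win N (i - K%:Z).
    by rewrite /win /K /=; move=> i h1 h2; lia.
  have hind : mr (C `&` C') = mr C * mr C'.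
    apply/eqP; rewrite -eqe EFinM -!mrE //; last exact: pmI.
    by rewrite (indep HXm Hind dis sC sC').
  have hsh : mr C' = mr C by rewrite /mr /C' (shift_inv HXm Hind Hid).
  have AK : shiftn K%:Z @^-1` A = A := shiftn_inv hA K.
  have hsd : mr (sd A C') = mr (sd A C).
    rewrite -{1}AK /mr.
    rewrite (_ : sd (shiftn K%:Z @^-1` A) C' = shiftn K%:Z @^-1` sd A C) //.
    by rewrite (shift_inv HXm Hind Hid) //; exact: pm_sd.
  have pAC := pm_sd pA pC; have pAC' := pm_sd pA pC'.
  have b1 : a <= mr C + mr (sd A C).
    apply: mr_sub => // x Ax; rewrite /sd /setU /=.
    by case: (pselect (C x)); tauto.
  have b2 : mr C <= a + mr (sd A C).
    apply: mr_sub => // x Cx; rewrite /sd /setU /=.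
    by case: (pselect (A x)); tauto.
  have b3 : mr (C `&` C') <= a + mr (sd A C).
    apply: mr_sub => //; first exact: pmI.
    move=> x [Cx _]; rewrite /sd /setU /=.
    by case: (pselect (A x)); tauto.
  have b4 : a <= mr (C `&` C') + mr (sd A C `|` sd A C').
    apply: mr_sub => //; [exact: pmI|exact: pmU|].
    move=> x Ax; rewrite /sd /setU /setI /=.
    by case: (pselect (C x)); case: (pselect (C' x)); tauto.
  have b5 : mr (sd A C `|` sd A C') <= mr (sd A C) + mr (sd A C').
    by apply: mr_sub => //; exact: pmU.
  rewrite hind hsh in b3 b4; rewrite hsd in b5.
  have c0 : 0 <= mr C by exact: mr_ge0.
  have c1 : mr C <= 1 by exact: mr_le1.
  have h : (mr C - a) * (mr C + a) <= eps * 2 by nra.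
  nra.
have h0 : a * (1 - a) = 0.
  apply/eqP; rewrite eq_le; apply/andP; split; last by apply: mulr_ge0; lra.
  rewrite leNgt; apply/negP => h.
  have := key (a * (1 - a) / 8) (divr_gt0 h _); lra.
have [->|h1] := eqVneq a 0; first by left.
right; congr (_%:E); move/eqP: h0; rewrite mulf_eq0 (negbTE h1) /= subr_eq0.
by move/eqP.
Qed.

End Erg.

End C.

Module D.
Import A.
Set Implicit Arguments. Unset Strict Implicit. Unset Printing Implicit Defensive.
Import Order.TTheory GRing.Theory Num.Theory.
Import numFieldNormedType.Exports.
Local Open Scope classical_set_scope.
Local Open Scope ring_scope.

Section Model.
Context {R : realType}.
Variables (q d : nat) (r mu1 mu2 : R) (phi psi : nat -> R).
Local Notation Om := (int -> R).

Definition maF (mu : R) (coef : nat -> R) (f : Om) (n : int) : R :=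
  mu + f n + \sum_(1 <= i < q.+1) coef i * f (n - i%:Z).
Definition aF f n := maF mu2 psi f n.
Definition bF f n := maF mu1 phi f n.
Definition Uf (f : Om) m := @Defs.indic R (aF f m <= r).
Definition Wf (f : Om) m := @Defs.indic R (bF f m <= r) - @Defs.indic R (aF f m <= r).
Definition partialF (f : Om) (n : int) (N : nat) : R :=
  \sum_(1 <= j < N.+1) (\prod_(1 <= s < j) Wf f (n - (s * d)%:Z)) * Uf f (n - (j * d)%:Z).
Definition PiF (f : Om) (n : int) (N : nat) : R :=
  \prod_(1 <= s < N.+1) Wf f (n - (s * d)%:Z).

Lemma idx_shift (n : int) s : n - ((s.+1 * d)%:Z) = (n - d%:Z) - (s * d)%:Z.
Proof. rewrite mulSn PoszD opprD addrA //. Qed.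

Lemma PiF_rec f n N : PiF f n N.+1 = Wf f (n - d%:Z) * PiF f (n - d%:Z) N.
Proof.
rewrite /PiF big_nat_recl // mul1n; congr (_ * _).
by apply: eq_bigr => s _; rewrite idx_shift.
Qed.

Lemma partialF_rec f n N :
  partialF f n N.+1 = Uf f (n - d%:Z) + Wf f (n - d%:Z) * partialF f (n - d%:Z) N.
Proof.
rewrite /partialF big_nat_recl // big_geq // mul1r mul1n; congr (_ + _).
rewrite big_distrr /=; apply: eq_big_nat => j /andP [j1 _].
rewrite big_nat_recl // mul1n mulrA; congr (_ * _ * _).
- by apply: eq_bigr => s _; rewrite idx_shift.
- by rewrite idx_shift.
Qed.

Lemma partialF0 f n : partialF f n 0 = 0.
Proof. by rewrite /partialF big_geq. Qed.

Lemma partialF01 f n N : partialF f n N = 0 \/ partialF f n N = 1.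
Proof.
elim: N n => [|N ih] n; first by left; exact: partialF0.
rewrite partialF_rec /Wf /Uf /Defs.indic.
by case: (ih (n - d%:Z)) => ->; case: ifP; case: ifP => _ _;
  first [left; lra | right; lra].
Qed.

Lemma PiF_zero f n s N : (1 <= s <= N)%N -> Wf f (n - (s * d)%:Z) = 0 -> PiF f n N = 0.
Proof.
move=> /andP [s1 sN] W0; rewrite /PiF (big_cat_nat _ (n:=s)) //=; last by rewrite ltnW.
by rewrite [X in _ * X = _]big_ltn ?ltnS //= W0 mul0r mulr0.
Qed.

Lemma partialF_stab f n s N : (1 <= s <= N)%N -> Wf f (n - (s * d)%:Z) = 0 ->
  partialF f n N = partialF f n s.
Proof.
move=> /andP [s1 sN] W0; elim: N sN => [|N ih]; first by rewrite leqn0 => /eqP ->.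
rewrite leq_eqVlt => /orP [/eqP -> //| ]; rewrite ltnS => sN.
rewrite /partialF big_nat_recr //= -/(partialF f n N) ih //.
have : PiF f n N = 0 by apply: (PiF_zero (s:=s)) => //; rewrite s1.
by rewrite /PiF => ->; rewrite mul0r addr0.
Qed.


Lemma maF_shift mu coef f n : maF mu coef (Defs.shift f) n = maF mu coef f (n + 1).
Proof.
rewrite /maF /Defs.shift; congr (_ + _ + _); apply: eq_bigr => i _.
by congr (_ * f _); rewrite addrAC.
Qed.

Lemma Uf_shift f m : Uf (Defs.shift f) m = Uf f (m + 1).
Proof. by rewrite /Uf /aF maF_shift. Qed.

Lemma Wf_shift f m : Wf (Defs.shift f) m = Wf f (m + 1).
Proof. by rewrite /Wf /aF /bF !maF_shift. Qed.

Lemma partialF_shift f n N : partialF (Defs.shift f) n N = partialF f (n + 1) N.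
Proof.
rewrite /partialF; apply: eq_bigr => j _; rewrite Uf_shift addrAC; congr (_ * _).
by apply: eq_bigr => s _; rewrite Wf_shift addrAC.
Qed.

Definition alphaF (f : Om) (n : int) : R := limn_sup (fun N => partialF f n N).

Lemma alphaF_shift f n : alphaF (Defs.shift f) n = alphaF f (n + 1).
Proof. by rewrite /alphaF; congr limn_sup; apply: funext => N; rewrite partialF_shift. Qed.

Lemma alphaF_stab f n s : (1 <= s)%N -> Wf f (n - (s * d)%:Z) = 0 ->
  (fun N => partialF f n N) @ \oo --> partialF f n s /\ alphaF f n = partialF f n s.
Proof.
move=> s1 W0.
have c : (fun N => partialF f n N) @ \oo --> partialF f n s.
  apply: cvg_near_cst; exists s => // N /= sN.
  by apply: partialF_stab W0; rewrite s1.
by split => //; rewrite /alphaF (cvg_limn_inf_sup c).2.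
Qed.

Lemma alphaF01_stab f n s : (1 <= s)%N -> Wf f (n - (s * d)%:Z) = 0 ->
  alphaF f n = 0 \/ alphaF f n = 1.
Proof. by move=> s1 W0; rewrite (alphaF_stab s1 W0).2; exact: partialF01. Qed.

Local Notation OmI := (@A.OmI R).

Lemma msum (dd : measure_display) (TT : measurableType dd) (D : set TT) (I' : eqType)
   (s : seq I') (h : I' -> TT -> R) :
  (forall i, i \in s -> measurable_fun D (h i)) ->
  measurable_fun D (fun x => \sum_(i <- s) h i x).
Proof.
elim: s => [mh|x y ih mh].
  by under eq_fun do rewrite big_nil//=; exact: measurable_cst.
under eq_fun do rewrite big_cons//=; apply: measurable_funD => //.
- by apply: mh; rewrite mem_head.
- by apply: ih => n ny; apply: mh; rewrite inE orbC ny.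
Qed.

Lemma mindic (dd : measure_display) (TT : measurableType dd) (D : set TT) (g : TT -> R) :
  measurable_fun D g -> measurable_fun D (fun x => @Defs.indic R (g x <= r)).
Proof.
move=> mg.
have mb : measurable_fun setT (fun b : bool => @Defs.indic R b) by [].
apply: (measurableT_comp mb).
exact: measurable_fun_ler mg (measurable_cst _).
Qed.

Definition window (m : int) : set int := [set i | (m - q%:Z <= i) && (i <= m)].

Lemma maF_meas I mu coef m : window m `<=` I ->
  measurable_fun setT (fun f : OmI I => maF mu coef f m).
Proof.
move=> wI; rewrite /maF; apply: measurable_funD; first apply: measurable_funD.
- exact: measurable_cst.
- by apply: coord_meas; apply: wI; rewrite /window /=; apply/andP; split => //; lia.
- apply: msum => i; rewrite mem_index_iota => /andP [i1 iq].
  apply: measurable_funM; first exact: measurable_cst.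
  by apply: coord_meas; apply: wI; rewrite /window /=; apply/andP; split; lia.
Qed.

Lemma Uf_meas I m : window m `<=` I -> measurable_fun setT (fun f : OmI I => Uf f m).
Proof. by move=> wI; apply: mindic; exact: maF_meas. Qed.

Lemma Wf_meas I m : window m `<=` I -> measurable_fun setT (fun f : OmI I => Wf f m).
Proof. by move=> wI; apply: measurable_funB; apply: mindic; exact: maF_meas. Qed.

Lemma partialF_meas n N : measurable_fun setT (fun f : OmI setT => partialF f n N).
Proof.
rewrite /partialF; apply: msum => j _; apply: measurable_funM; last exact: Uf_meas.
by apply: measurable_prod => s _; exact: Wf_meas.
Qed.

Lemma alphaF_meas n : measurable_fun setT (fun f : OmI setT => alphaF f n).
Proof.
apply: measurable_fun_limn_sup; last by move=> N; exact: partialF_meas.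
- move=> f _; exists 1 => _ [N _ <-]; by case: (partialF01 f n N) => ->; lra.
- move=> f _; exists 0 => _ [N _ <-]; by case: (partialF01 f n N) => ->; lra.
Qed.

Definition cF (f : Om) (n : int) : R :=
  (mu1 - mu2) + \sum_(1 <= i < q.+1) (phi i - psi i) * f (n - i%:Z).

Lemma cFE f n : cF f n = bF f n - aF f n.
Proof.
rewrite /cF /bF /aF /maF.
have -> : \sum_(1 <= i < q.+1) (phi i - psi i) * f (n - i%:Z) =
  \sum_(1 <= i < q.+1) phi i * f (n - i%:Z) - \sum_(1 <= i < q.+1) psi i * f (n - i%:Z).
  by rewrite -sumrB; apply: eq_bigr => i _; rewrite mulrBl.
lra.
Qed.

Lemma cF_meas n : measurable_fun setT (fun f : OmI setT => cF f n).
Proof.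
apply: measurable_funD; first exact: measurable_cst.
apply: msum => i _; apply: measurable_funM; first exact: measurable_cst.
exact: coord_meas.
Qed.

Lemma cF_shift f n : cF (Defs.shift f) n = cF f (n + 1).
Proof. by rewrite !cFE /aF /bF !maF_shift. Qed.

Definition GF (f : Om) : Om := fun n => aF f n + cF f n * alphaF f n.

Lemma GF_shift f : GF (Defs.shift f) = Defs.shift (GF f).
Proof.
apply: funext => n; rewrite /GF /Defs.shift /aF maF_shift cF_shift alphaF_shift //.
Qed.

Lemma GF_meas : measurable_fun setT (GF : OmI setT -> OmI setT).
Proof.
apply: (@measurability _ _ (OmI setT) (OmI setT) setT GF (@A.Rect R setT)) => //.
move=> _ [_ [s [B [_ _ mB ->]]] <-]; rewrite setTI.
elim: s => [|i s ih].
  by rewrite rect_nil preimage_setT; exact: measurableT.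
rewrite rect_cons preimage_setI; apply: measurableI => //.
have mGi : measurable_fun setT (fun f : OmI setT => GF f i).
  rewrite /GF; apply: measurable_funD; first exact: maF_meas.
  by apply: measurable_funM; [exact: cF_meas|exact: alphaF_meas].
by have := mGi measurableT _ (mB i); rewrite setTI.
Qed.

End Model.

End D.

Module E.
Import A B C D.
Set Implicit Arguments. Unset Strict Implicit. Unset Printing Implicit Defensive.
Import Order.TTheory GRing.Theory Num.Theory.
Import numFieldNormedType.Exports.
Local Open Scope classical_set_scope.
Local Open Scope ring_scope.

Section Main.
Context {dT : measure_display} {T : measurableType dT} {R : realType}.
Variable P : probability T R.
Variable e : int -> T -> R.
Variables (q d : nat) (r mu1 mu2 : R) (phi psi : nat -> R).
Hypothesis Hiid : iid P e.
Hypothesis hd : (0 < d)%N.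
Local Notation Om := (int -> R).
Local Notation X := (Defs.path e).
Local Notation aF := (@D.aF R q mu2 psi).
Local Notation bF := (@D.bF R q mu1 phi).
Local Notation Uf := (@D.Uf R q r mu2 psi).
Local Notation Wf := (@D.Wf R q r mu1 mu2 phi psi).
Local Notation partialF := (@D.partialF R q d r mu1 mu2 phi psi).
Local Notation PiF := (@D.PiF R q d r mu1 mu2 phi psi).
Local Notation alphaF := (@D.alphaF R q d r mu1 mu2 phi psi).
Local Notation GF := (@D.GF R q d r mu1 mu2 phi psi).
Local Notation sI := (@A.sI R).
Local Notation OmI := (@A.OmI R).
Local Notation pm := (@path_measurable R).
Hypothesis Hnz : forall n, (P [set w | (aF (X w) n <= r)%R /\ (bF (X w) n <= r)%R] +
  P [set w | (r < aF (X w) n)%R /\ (r < bF (X w) n)%R])%E <> 0%E.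

Lemma HXm : forall i, measurable_fun setT (fun w => X w i).
Proof. by case: Hiid. Qed.

Lemma Hind : forall s B, uniq s -> (forall i, measurable (B i)) ->
  P (X @^-1` rect s B) = (\prod_(i <- s) P (X @^-1` ((fun f : Om => f i) @^-1` B i)))%E.
Proof.
move=> s B u mB; case: Hiid => _ [hi _]; by rewrite -hi.
Qed.

Lemma Hid : forall i B, measurable B ->
  P (X @^-1` ((fun f : Om => f i) @^-1` B)) = P (X @^-1` ((fun f : Om => f 0) @^-1` B)).
Proof. by move=> i B mB; case: Hiid => _ [_ hid]; exact: hid. Qed.

Local Notation mr := (mr P X).

Lemma Wf_shiftn k f m : Wf (shiftn k f) m = Wf f (m + k).
Proof.
have h mu coef : D.maF q mu coef (shiftn k f) m = D.maF q mu coef f (m + k).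
  rewrite /D.maF /shiftn; congr (_ + _ + _); apply: eq_bigr => i _.
  by congr (_ * f _); rewrite addrAC.
by rewrite /D.Wf /D.aF /D.bF !h.
Qed.

Lemma sE m : sI (window q m) [set f | Wf f m <> 0].
Proof.
have := @Wf_meas R q r mu1 mu2 phi psi (window q m) m (fun i h => h) measurableT
  (~` [set 0]) (measurableC (measurable_set1 0)).
by rewrite setTI.
Qed.

Definition E0 := [set f : Om | Wf f 0 <> 0].

Lemma mrE_shift m : mr [set f | Wf f m <> 0] = mr E0.
Proof.
have -> : [set f | Wf f m <> 0] = shiftn m @^-1` E0.
  by apply/seteqP; split => f /=; rewrite /E0 /= Wf_shiftn add0r.
rewrite /C.mr (shift_inv HXm Hind Hid) //.
exact: (sI_pm (@sE 0)).
Qed.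

Lemma mleR : measurable [set x : R | x <= r].
Proof.
rewrite (_ : [set x : R | x <= r] = `]-oo, r]%classic); first exact: measurable_itv.
by apply/seteqP; split => x /=; rewrite in_itv /=.
Qed.

Lemma mltR : measurable [set x : R | r < x].
Proof.
rewrite (_ : [set x : R | r < x] = `]r, +oo[%classic); first exact: measurable_itv.
by apply/seteqP; split => x /=; rewrite in_itv /= andbT.
Qed.

Lemma pm_pre (g : Om -> R) B : measurable_fun setT (g : OmI setT -> R) ->
  measurable B -> pm (g @^-1` B).
Proof. by move=> mg mB; apply/pm_sI; have := mg measurableT B mB; rewrite setTI. Qed.

Lemma Xpm A : pm A -> measurable (X @^-1` A).
Proof. move=> h; exact: (X_pm HXm h). Qed.

Lemma maF0_meas mu coef m : measurable_fun setT (fun f : OmI setT => D.maF q mu coef f m).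
Proof. exact: maF_meas. Qed.

Lemma p_lt1 : mr E0 < 1.
Proof.
have pE : pm E0 := sI_pm (@sE 0).
have pC : pm (~` E0) by apply/pm_sI; apply: sI_setC; exact/pm_sI.
have h1 : mr (setT `\` ~` E0) = mr setT - mr (~` E0).
  by apply: (mr_D P HXm) => //; exact: pmT.
rewrite setTD setCK (mr_setT P X) in h1; rewrite h1.
suff : 0 < mr (~` E0) by lra.
rewrite lt_neqAle (mr_ge0) andbT eq_sym; apply/eqP => h0.
have mA : measurable [set w | (aF (X w) 0 <= r)%R] := Xpm (pm_pre (maF0_meas _ _ _) mleR).
have mB : measurable [set w | (bF (X w) 0 <= r)%R] := Xpm (pm_pre (maF0_meas _ _ _) mleR).
have mA' : measurable [set w | (r < aF (X w) 0)%R] := Xpm (pm_pre (maF0_meas _ _ _) mltR).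
have mB' : measurable [set w | (r < bF (X w) 0)%R] := Xpm (pm_pre (maF0_meas _ _ _) mltR).
apply: (@Hnz 0); rewrite -measureU.
- rewrite -[RHS](_ : (mr (~` E0))%:E = 0%E); last by rewrite h0.
  rewrite -(mrE P HXm) //; congr (P _); apply/seteqP; split => w /=;
    rewrite /E0 /D.Wf /Defs.indic /= ?ltNge;
    case: (aF (X w) 0 <= r); case: (bF (X w) 0 <= r) => /=; try tauto;
    try (by move=> ?; lra); by move=> [[]|[]].
- exact: measurableI.
- exact: measurableI.
- by apply/seteqP; split => w // [[h1' h2'] [h3 h4]]; lra.
Qed.

Definition Dset (n : int) (M : nat) : set Om :=
  [set f | forall j, (1 <= j <= M)%N -> Wf f (n - (j * q.+1 * d)%:Z) <> 0].
Definition Jset (n : int) (M : nat) : set int := [set i | n - (M * q.+1 * d)%:Z - q%:Z <= i].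

Lemma Dset_sI n M : sI (Jset n M) (Dset n M) /\ mr (Dset n M) = (mr E0) ^+ M.
Proof.
elim: M => [|M [sD mD]].
  have -> : Dset n 0 = setT.
    by apply/seteqP; split => f // _ [|j].
  by split; [exact: sI_setT | rewrite expr0 (mr_setT P X)].
pose m := n - (M.+1 * q.+1 * d)%:Z.
have e1 : (M.+1 * q.+1 * d = M * q.+1 * d + q.+1 * d)%N by rewrite mulSnr mulnDl.
have e2 : (q.+1 <= q.+1 * d)%N by rewrite leq_pmulr.
have -> : Dset n M.+1 = Dset n M `&` [set f | Wf f m <> 0].
  apply/seteqP; split => f.
  - move=> h; split; last by apply: h; rewrite /= ltnS leqnn.
    by move=> j /andP [j1 jM]; apply: h; rewrite j1 /= leqW.
  - move=> [h1 h2] j /andP [j1]; rewrite leq_eqVlt => /orP [/eqP -> //| jM].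
    by apply: h1; rewrite j1 -ltnS jM.
have hJ : Jset n M `<=` Jset n M.+1.
  rewrite /Jset => i /=; rewrite e1; move: (M * q.+1 * d)%N (q.+1 * d)%N e2 => x y e2; lia.
have hW : window q m `<=` Jset n M.+1.
  rewrite /Jset /window /m => i /= /andP [h _]; exact: h.
have dis : forall i, Jset n M i -> ~ window q m i.
  rewrite /Jset /window /m => i /= h1 /andP [_ h2]; move: h1 h2; rewrite e1.
  move: (M * q.+1 * d)%N (q.+1 * d)%N e2 => x y e2; lia.
split.
  apply: sI_setI; [exact: (sI_mono hJ sD) | exact: (sI_mono hW (@sE m))].
have pD := sI_pm sD; have pE := sI_pm (@sE m).
apply/eqP; rewrite -eqe -(mrE P HXm); last exact: pmI.
rewrite (indep HXm Hind dis sD (@sE m)) !(mrE P HXm) // mD mrE_shift.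
by rewrite -EFinM exprSr.
Qed.

Definition Bad (n : int) : set Om := [set f | forall s, Wf f (n - (s.+1 * d)%:Z) <> 0].

Lemma Bad_sub n M : Bad n `<=` Dset n M.
Proof.
move=> f h j /andP [j1 _]; have := h (j * q.+1).-1.
by rewrite prednK // muln_gt0 j1.
Qed.

Lemma Bad_pm n : pm (Bad n).
Proof.
apply/pm_sI.
have -> : Bad n = \bigcap_s [set f | Wf f (n - (s.+1 * d)%:Z) <> 0].
  by apply/seteqP; split => f h s; [move=> _; exact: (h s)|exact: (h s I)].
apply: (@bigcapT_measurable _ (OmI setT)) => s.
exact: (sI_mono (fun _ _ => I) (@sE _)).
Qed.

Lemma Bad0 n : mr (Bad n) = 0.
Proof.
have p0 : 0 <= mr E0 := mr_ge0 P X _.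
have c : (fun M => mr E0 ^+ M) @ \oo --> 0.
  by apply: cvg_expr; rewrite ger0_norm // p_lt1.
apply/eqP; rewrite eq_le mr_ge0 andbT.
have <- : lim ((fun M => mr E0 ^+ M) @ \oo) = 0 := cvg_lim (@Rhausdorff R) c.
apply: limr_ge; first by apply/cvg_ex; exists 0.
apply: nearW => M; rewrite -(Dset_sI n M).2.
by apply: (mr_le P HXm) => //; [exact: Bad_pm|exact: (sI_pm (Dset_sI n M).1)|exact: Bad_sub].
Qed.

Lemma ae_forall_int (Q : int -> T -> Prop) :
  (forall n, {ae P, forall w, Q n w}) -> {ae P, forall w, forall n, Q n w}.
Proof.
move=> h.
pose g (k : nat) : int := if odd k then - (k./2.+1)%:Z else (k./2)%:Z.
have gs : forall n : int, exists k, g k = n.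
  case=> m.
  - by exists m.*2; rewrite /g odd_double doubleK.
  - exists m.*2.+1; rewrite /g /= odd_double /= uphalf_double.
    by rewrite NegzE.
have := ae_foralln (fun k => h (g k)).
apply: filterS => w H n; have [k <-] := gs n; exact: H.
Qed.

Lemma ae_good : {ae P, forall w, forall n, exists s, Wf (X w) (n - (s.+1 * d)%:Z) = 0}.
Proof.
apply: ae_forall_int => n.
exists (X @^-1` Bad n); split.
- exact: Xpm (Bad_pm n).
- by rewrite (mrE P HXm) ?Bad0 //; exact: Bad_pm.
- move=> w /= hw s hs; apply: hw; by exists s.
Qed.

Definition good (f : Om) (n : int) := exists s, Wf f (n - (s.+1 * d)%:Z) = 0.

Lemma good_stab f n : good f n -> exists N0, forall N, (N0 <= N)%N -> alphaF f n = partialF f n N.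
Proof.
move=> [s hs]; exists s.+1 => N sN.
rewrite (alphaF_stab (s:=s.+1) _ hs).2 //.
by rewrite (partialF_stab (s:=s.+1) _ hs) // sN.
Qed.

Lemma alpha_rec f n : good f n -> good f (n - d%:Z) ->
  alphaF f n = Uf f (n - d%:Z) + Wf f (n - d%:Z) * alphaF f (n - d%:Z).
Proof.
move=> /good_stab [N1 h1] /good_stab [N2 h2].
rewrite (h1 (maxn N1 N2).+1); last by rewrite leqW // leq_maxl.
by rewrite partialF_rec (h2 (maxn N1 N2)) // leq_maxr.
Qed.

Lemma alpha01 f n : good f n -> alphaF f n = 0 \/ alphaF f n = 1.
Proof. by move=> [s hs]; exact: (alphaF01_stab (s:=s.+1)). Qed.

Lemma tma_step f n :
  alphaF f n = Uf f (n - d%:Z) + Wf f (n - d%:Z) * alphaF f (n - d%:Z) ->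
  (alphaF f (n - d%:Z) = 0 \/ alphaF f (n - d%:Z) = 1) ->
  GF f n = if GF f (n - d%:Z) <= r then bF f n else aF f n.
Proof.
rewrite /D.GF !cFE => -> [] ->.
- rewrite !mulr0 !addr0 /D.Uf /D.Wf /Defs.indic.
  by case: ifP => _ /=; lra.
- have E a b : a + (b - a) = b :> R by rewrite addrC subrK.
  rewrite !mulr1 !E /D.Uf /D.Wf /Defs.indic.
  by case: ifP => _ /=; lra.
Qed.

Lemma uniq_step f (yt : int -> R) n :
  (forall m, yt m = if yt (m - d%:Z) <= r then bF f m else aF f m) ->
  good f n -> yt n = GF f n.
Proof.
move=> H gn.
pose Z m := @Defs.indic R (yt m <= r).
have Zrec m : Z (m - d%:Z) = Uf f (m - d%:Z) + Wf f (m - d%:Z) * Z (m - d%:Z - d%:Z).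
  rewrite /Z (H (m - d%:Z)) /D.Uf /D.Wf /Defs.indic.
  by case: (yt (m - d%:Z - d%:Z) <= r); case: (aF f (m - d%:Z) <= r);
    case: (bF f (m - d%:Z) <= r) => /=; lra.
have Zit : forall N m, Z (m - d%:Z) = partialF f m N + PiF f m N * Z (m - (N.+1 * d)%:Z).
  elim=> [|N ih] m.
    by rewrite /D.PiF partialF0 big_geq // mul1r add0r mul1n.
  rewrite Zrec ih partialF_rec PiF_rec -idx_shift.
  by rewrite mulrDr addrA mulrA.
have [s hs] := gn.
have P0 : PiF f n s.+1 = 0 by apply: (PiF_zero (s:=s.+1)) => //; rewrite leqnn.
have hZ : Z (n - d%:Z) = alphaF f n.
  by rewrite (Zit s.+1) P0 mul0r addr0 (alphaF_stab (s:=s.+1) _ hs).2.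
rewrite (H n) /D.GF cFE -hZ /Z /Defs.indic.
by case: ifP => _; lra.
Qed.

End Main.

End E.

Import A B C D E.
Import Order.TTheory GRing.Theory Num.Theory.
Import numFieldNormedType.Exports.
Local Open Scope classical_set_scope.
Local Open Scope ring_scope.

Theorem theorem2p1 (dT : measure_display) (T : measurableType dT)
  (R : realType) (P : probability T R) (e : int -> T -> R)
  (q d : nat) (r mu1 mu2 : R) (phi psi : nat -> R) :
  iid P e -> (0 < q)%N -> (0 < d)%N ->
  let a := ma_part mu2 psi q e in
  let b := ma_part mu1 phi q e in
  (forall n : int,
     (P [set w | (a n w <= r)%R /\ (b n w <= r)%R] +
      P [set w | (r < a n w)%R /\ (r < b n w)%R])%E <> 0%E) ->
  exists alpha : int -> T -> R,
    (* alpha n stands for alpha_{n-d} *)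
    (forall n : int,
       measurable_fun setT (alpha n) /\
       P.-integrable setT (EFin \o alpha n) /\
       ((fun N : nat => (\int[P]_(w in setT)
            (`| alpha_partial a b r d n N w - alpha n w |)%:E)%E) @ \oo
          --> 0%E) /\
       {ae P, forall w,
          (fun N : nat => alpha_partial a b r d n N w) @ \oo --> alpha n w}) /\
    let y : int -> T -> R := fun n w =>
      a n w + ((mu1 - mu2) + \sum_(1 <= i < q.+1)
                 (phi i - psi i) * e (n - i%:Z) w) * alpha n w in
    (forall n : int, measurable_fun setT (y n)) /\
    TMA_solution P a b r d y /\
    strictly_stationary P y /\
    ergodic P y /\
    (forall yt : int -> T -> R,
       (forall n : int, measurable_fun setT (yt n)) ->
       TMA_solution P a b r d yt ->
       forall n : int, {ae P, forall w, yt n w = y n w}).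
Proof.
move=> Hiid q0 d0 a b Hnz.
have hX := HXm Hiid; have hI := Hind Hiid; have hD := Hid Hiid.
pose X := Defs.path e.
have Xmeas : measurable_fun setT (X : T -> A.OmI setT).
  move=> _ S mS; rewrite setTI; exact: (Xpm Hiid (sI_pm mS)).
have gd := ae_good Hiid d0 Hnz.
pose alpha := fun n w => D.alphaF q d r mu1 mu2 phi psi (X w) n.
exists alpha; split.
  move=> n.
  have ma : measurable_fun setT (alpha n) := measurableT_comp (alphaF_meas _ _ _ _ _ _ _ n) Xmeas.
  have mp N : measurable_fun setT (fun w => D.partialF q d r mu1 mu2 phi psi (X w) n N)
    := measurableT_comp (partialF_meas _ _ _ _ _ _ _ n N) Xmeas.
  have cv : {ae P, forall w, (fun N => D.partialF q d r mu1 mu2 phi psi (X w) n N) @ \oo --> alpha n w}.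
    apply: filterS gd => w hw; have [s hs] := hw n.
    have [c1 c2] := alphaF_stab (s:=s.+1) isT hs.
    by rewrite /alpha c2.
  have mf_ : forall N, measurable_fun setT (fun w => (D.partialF q d r mu1 mu2 phi psi (X w) n N)%:E).
    by move=> N; apply/measurable_EFinP; exact: mp.
  have mf : measurable_fun setT (EFin \o alpha n) by apply/measurable_EFinP.
  have f_f : {ae P, forall w, setT w -> (fun N => (D.partialF q d r mu1 mu2 phi psi (X w) n N)%:E) @ \oo --> (EFin \o alpha n) w}.
    apply: filterS cv => w hw _ /=; apply/fine_cvgP; split; [exact: nearW | exact: hw].
  have ig := finite_measure_integrable_cst P 1 (@measurableT _ T).
  have f_g : {ae P, forall w N, setT w -> (`|(D.partialF q d r mu1 mu2 phi psi (X w) n N)%:E| <= (EFin \o cst 1%R) w)%E}.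
    apply: nearW => w N _; rewrite abse_EFin lee_fin /=.
    by case: (partialF01 q d r mu1 mu2 phi psi (X w) n N) => ->; rewrite ?normr0 ?normr1.
  have [ig' L1 _] := dominated_convergence measurableT mf_ mf f_f ig f_g.
  split => //; split => //; split => //.
move=> y.
pose G := D.GF q d r mu1 mu2 phi psi.
have pathyE : forall w, Defs.path y w = G (X w) by move=> w; apply: funext => n.
have GFm : forall S, path_measurable S -> path_measurable (G @^-1` S).
  move=> S /pm_sI mS; apply: (@sI_pm _ setT).
  by have := GF_meas q d r mu1 mu2 phi psi measurableT mS; rewrite setTI.
have preE : forall S, Defs.path y @^-1` S = X @^-1` (G @^-1` S).
  by move=> S; apply/seteqP; split => w /=; rewrite pathyE.
have shE : forall S, G @^-1` (Defs.shift @^-1` S) = shiftn 1 @^-1` (G @^-1` S).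
  by move=> S; apply/seteqP; split => f /=; rewrite /G -GF_shift.
have shE' : forall S, Defs.shift @^-1` (G @^-1` S) = G @^-1` (Defs.shift @^-1` S).
  by move=> S; apply/seteqP; split => f /=; rewrite /G GF_shift.
split.
  move=> n.
  have mG : measurable_fun setT (fun f : A.OmI setT => G f n).
    apply: measurable_funD; first exact: maF_meas.
    by apply: measurable_funM; [exact: cF_meas|exact: alphaF_meas].
  exact: (measurableT_comp mG Xmeas).
split.
  move=> n; apply: filterS gd => w hw.
  apply: tma_step; last by apply: alpha01; exact: hw (n - d%:Z).
  by apply: alpha_rec; [exact: hw n | exact: hw (n - d%:Z)].
split.
  move=> S pS; rewrite !preE shE; exact: (shift_inv hX hI hD 1 (GFm S pS)).
split.
  move=> S pS hS; rewrite preE; apply: (erg hX hI hD (GFm S pS)).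
  by rewrite shE' hS.
move=> yt myt hyt n.
have H := ae_forall_int hyt.
move: H gd; apply: filterS2 => w h1 h2.
apply: (uniq_step (yt := fun m => yt m w)); last exact: h2 n.
by move=> m; exact: h1 m.
Qed.
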